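(* A coarse space $(X,\mathcal E)$ has $\operatorname{asdim}(X)\le n$ for some $n\in\omega$ if and only if for every $\varepsilon\in\mathcal E$ there exist $\delta\in\mathcal E$ and a coloring $\chi:X\to\{0,\dots,n\}$ such that every $\chi$-monochrome $\varepsilon$-chain $C\subset X$ satisfies $C\times C\subset\delta$.
   Context: A coarse space is a pair $(X,\mathcal E)$ of a set and a family of entourages $\varepsilon\subset X\times X$ that contain the diagonal, are symmetric, are (up to containment) closed under composition, and such that any symmetric $\delta$ with $\Delta_X\subset\delta\subset\varepsilon\in\mathcal E$ is in $\mathcal E$. $B(x,\varepsilon)=\{y:(x,y)\in\varepsilon\}$; $\operatorname{mesh}(\mathcal U)=\bigcup_{U\in\mathcal U}U\times U$. $\operatorname{asdim}(X)$ is the least $n\in\omega$ such that for every $\varepsilon\in\mathcal E$ there is a cover $\mathcal U$ of $X$ with $\operatorname{mesh}(\mathcal U)\subset\delta$ for some $\delta\in\mathcal E$ and each $B(x,\varepsilon)$ meeting at most $n+1$ members of $\mathcal U$ ($\infty$ if none). An $\varepsilon$-chain is a finite set $\{x_0,\dots,x_m\}$ with $(x_i,x_{i+1})\in\varepsilon$ for all $i<m$; it is $\chi$-monochrome if $\chi$ is constant on it. *)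

(* Defs.v *)
From Stdlib Require Import List Arith.
Import ListNotations.

Definition entourage (X : Type) := X -> X -> Prop.

Definition ball {X : Type} (x : X) (eps : entourage X) : X -> Prop := fun y => eps x y.

Definition ecomp {X : Type} (e1 e2 : entourage X) : entourage X :=
  fun x z => exists y, e1 x y /\ e2 y z.

Definition esubset {X : Type} (e1 e2 : entourage X) : Prop := forall x y, e1 x y -> e2 x y.

Definition coarse_structure (X : Type) (E : entourage X -> Prop) : Prop :=
  (forall eps, E eps -> forall x, eps x x) /\
  (forall eps, E eps -> forall x y, eps x y -> eps y x) /\
  (forall e1 e2, E e1 -> E e2 -> exists e3, E e3 /\ esubset (ecomp e1 e2) e3) /\
  (forall eps delta, E eps ->
     (forall x, delta x x) -> (forall x y, delta x y -> delta y x) ->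
     esubset delta eps -> E delta).

Definition mesh {X : Type} (U : (X -> Prop) -> Prop) : entourage X :=
  fun x y => exists A, U A /\ A x /\ A y.

Definition is_cover {X : Type} (U : (X -> Prop) -> Prop) : Prop :=
  forall x, exists A, U A /\ A x.

Definition meets_at_most {X : Type} (U : (X -> Prop) -> Prop) (S : X -> Prop) (k : nat) : Prop :=
  exists l : list (X -> Prop), length l <= k /\
    forall A, U A -> (exists y, S y /\ A y) -> In A l.

Definition asdim_prop {X : Type} (E : entourage X -> Prop) (n : nat) : Prop :=
  forall eps, E eps -> exists U : (X -> Prop) -> Prop,
    is_cover U /\ (exists delta, E delta /\ esubset (mesh U) delta) /\
    forall x, meets_at_most U (ball x eps) (S n).

Definition asdim_le {X : Type} (E : entourage X -> Prop) (n : nat) : Prop :=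
  exists m, m <= n /\ asdim_prop E m.

Inductive chain_list {X : Type} (eps : entourage X) : list X -> Prop :=
| chain_nil : chain_list eps []
| chain_one : forall x, chain_list eps [x]
| chain_cons : forall x y l, eps x y -> chain_list eps (y :: l) -> chain_list eps (x :: y :: l).

Definition is_chain {X : Type} (eps : entourage X) (C : X -> Prop) : Prop :=
  exists l : list X, l <> [] /\ (forall x, C x <-> In x l) /\ chain_list eps l.

Definition monochrome {X : Type} (chi : X -> nat) (C : X -> Prop) : Prop :=
  forall x y, C x -> C y -> chi x = chi y.

(* Main.v *)
Require Import Defs.
From Stdlib Require Import List Arith Lia Classical ClassicalEpsilon FunctionalExtensionality PropExtensionality Relations.
Import ListNotations.

Definition fin_card {T} (P : T -> Prop) (k : nat) :=
  exists l, NoDup l /\ length l = k /\ forall t, P t <-> In t l.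

Lemma exists_card {T} (l0 : list T) : forall P : T -> Prop,
  (forall t, P t -> In t l0) -> exists k, fin_card P k /\ k <= length l0.
Proof.
 induction l0 as [|a l0 IH]; intros P HP.
 - exists 0. split; [|simpl; lia]. exists []. split; [constructor|split; [reflexivity|]].
   intro t; split; [intro H; exact (HP t H)| intros []].
 - destruct (classic (P a)) as [Ha|Ha].
   + destruct (IH (fun t => P t /\ t <> a)) as [k [[l [Hnd [Hlen Hiff]]] Hk]].
     { intros t [Ht Hne]. destruct (HP t Ht) as [<-|H]; [congruence|exact H]. }
     exists (S k). split; [|simpl; lia].
     exists (a :: l). split; [|split; [simpl; lia|]].
     * constructor; [|exact Hnd]. intro Hin. apply Hiff in Hin. destruct Hin as [_ Hn]; congruence.
     * intro t. split.
       -- intro Ht. destruct (classic (t = a)) as [->|Hne]; [left; reflexivity|right; apply Hiff; auto].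
       -- intros [<-|Hin]; [exact Ha|apply Hiff in Hin; tauto].
   + destruct (IH P) as [k [Hc Hk]].
     { intros t Ht. destruct (HP t Ht) as [<-|H]; [contradiction|exact H]. }
     exists k; split; [exact Hc|simpl; lia].
Qed.

Lemma card_le {T} (P Q : T -> Prop) k k' : fin_card P k -> fin_card Q k' ->
  (forall t, P t -> Q t) -> k <= k'.
Proof.
 intros [l [Hnd [<- Hl]]] [l' [Hnd' [<- Hl']]] HPQ.
 apply NoDup_incl_length; [exact Hnd|]. intros t Ht. apply Hl', HPQ, Hl, Ht.
Qed.

Lemma card_eq_sub {T} (P Q : T -> Prop) k k' : fin_card P k -> fin_card Q k' ->
  (forall t, P t -> Q t) -> k' <= k -> forall t, Q t -> P t.
Proof.
 intros [l [Hnd [<- Hl]]] [l' [Hnd' [<- Hl']]] HPQ Hle t Ht.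
 apply Hl. apply (NoDup_length_incl Hnd Hle).
 - intros u Hu. apply Hl', HPQ, Hl, Hu.
 - apply Hl', Ht.
Qed.

Lemma lvl_half {T} (Sx Sy : nat -> T -> Prop) jx jy kx kx' ky ky' :
 fin_card (Sx jx) kx -> fin_card (Sx (S jx)) kx' -> kx = kx' ->
 fin_card (Sy jy) ky -> fin_card (Sy (S jy)) ky' -> ky = ky' -> kx = ky ->
 (forall j t, Sx j t -> Sy (S j) t) ->
 (forall j j' t, j <= j' -> Sy j t -> Sy j' t) ->
 jx <= jy -> forall t, Sx jx t <-> Sy jy t.
Proof.
 intros Hx Hx' Ex Hy Hy' Ey Exy Hxy Hmy Hle.
 destruct (Nat.eq_dec jx jy) as [<-|Hne].
 - assert (Hsub : forall t, Sy (S jx) t -> Sy jx t).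
   { apply (card_eq_sub _ _ ky ky' Hy Hy'); [intros; apply (Hmy jx); [lia|auto]|lia]. }
   assert (Hsub2 : forall t, Sx jx t -> Sy jx t) by (intros; apply Hsub, Hxy; auto).
   intro t; split; [apply Hsub2|]. apply (card_eq_sub _ _ kx ky Hx Hy Hsub2); lia.
 - assert (Hsub2 : forall t, Sx jx t -> Sy jy t).
   { intros t Ht. apply (Hmy (S jx)); [lia|]. apply Hxy, Ht. }
   intro t; split; [apply Hsub2|]. apply (card_eq_sub _ _ kx ky Hx Hy Hsub2); lia.
Qed.

Lemma eps_spec {A} (i : inhabited A) (P : A -> Prop) : (exists x, P x) -> P (epsilon i P).
Proof. intro H. apply epsilon_spec; exact H. Qed.

Lemma forward (X : Type) (E : entourage X -> Prop) (n : nat) :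
  coarse_structure X E -> asdim_le E n ->
  forall eps, E eps ->
     exists delta, E delta /\
       exists chi : X -> nat, (forall x, chi x <= n) /\
         forall C : X -> Prop, is_chain eps C -> monochrome chi C ->
           forall x y, C x -> C y -> delta x y.
Proof.
 intros [Hrefl [Hsym [Hcomp Hsub]]] [m [Hmn Hasd]] eps Heps.
 assert (inhE : inhabited (entourage X)) by (constructor; exact (fun _ _ => True)).
 pose (nxt := fun e => epsilon inhE (fun e' => E e' /\ esubset (ecomp e eps) e')).
 pose (a := fun j => Nat.iter j nxt eps).
 assert (HaS : forall j, E (a j) -> E (a (S j)) /\ esubset (ecomp (a j) eps) (a (S j))).
 { intros j Hj. change (a (S j)) with (nxt (a j)). unfold nxt. apply eps_spec.
   apply Hcomp; auto. }
 assert (Ha : forall j, E (a j)).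
 { induction j; [exact Heps|apply HaS; auto]. }
 assert (Hstep : forall j u v w, a j u v -> eps v w -> a (S j) u w).
 { intros j u v w H1 H2. apply (proj2 (HaS j (Ha j))). exists v; auto. }
 assert (Hm1 : forall j u v, a j u v -> a (S j) u v).
 { intros j u v H. apply (Hstep j u v v H). apply Hrefl; auto. }
 assert (Hmono : forall j j' u v, j <= j' -> a j u v -> a j' u v).
 { intros j j' u v Hle. induction Hle; auto. }
 assert (Hasym : forall j u v, a j u v -> a j v u).
 { intros j u v. apply Hsym, Ha. }
 destruct (Hasd (a (S m)) (Ha _)) as [U [Hcov [[d0 [Hd0 Hmesh]] Hmult]]].
 pose (Sj := fun j x => fun A : X -> Prop => U A /\ exists y, a j x y /\ A y).
 assert (Hfin : forall x j, j <= S m -> exists k, fin_card (Sj j x) k /\ k <= S m).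
 { intros x j Hj. destruct (Hmult x) as [l0 [Hlen Hl0]].
   destruct (exists_card l0 (Sj j x)) as [k [Hk Hkl]].
   { intros A [HU [y [Hy HA]]]. apply Hl0; auto. exists y. split; auto.
     unfold ball. apply (Hmono j); auto. }
   exists k; split; auto; lia. }
 assert (inhN : inhabited nat) by (constructor; exact 0).
 pose (cnt := fun j x => epsilon inhN (fun k => fin_card (Sj j x) k)).
 assert (Hcnt : forall x j, j <= S m -> fin_card (Sj j x) (cnt j x) /\ cnt j x <= S m).
 { intros x j Hj. destruct (Hfin x j Hj) as [k [Hk Hkb]].
   assert (H : fin_card (Sj j x) (cnt j x)) by (apply eps_spec; eauto).
   split; auto. pose proof (card_le _ _ _ _ H Hk (fun t h => h)). lia. }
 assert (HSmono : forall x j j' A, j <= j' -> Sj j x A -> Sj j' x A).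
 { intros x j j' A Hle [HU [y [Hy HA]]]. split; auto. exists y; split; auto. apply (Hmono j); auto. }
 assert (HS0 : forall x, exists A, Sj 0 x A /\ A x).
 { intro x. destruct (Hcov x) as [A [HU HA]]. exists A. split; auto. split; auto.
   exists x; split; auto. apply Hrefl, Ha. }
 assert (Hpos : forall x j, j <= S m -> 1 <= cnt j x).
 { intros x j Hj. destruct (HS0 x) as [A [HA _]].
   destruct (proj1 (Hcnt x j Hj)) as [l [_ [Hl Hiff]]].
   assert (Hin : In A l) by (apply Hiff; apply (HSmono x 0); auto; lia).
   destruct l; [destruct Hin|simpl in Hl; lia]. }
 assert (Hcm : forall x j j', j <= j' -> j' <= S m -> cnt j x <= cnt j' x).
 { intros x j j' H1 H2. apply (card_le (Sj j x) (Sj j' x)); try apply Hcnt; try lia.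
   intros; apply (HSmono x j); auto. }
 assert (Hpig : forall x, exists j, j <= m /\ cnt j x = cnt (S j) x).
 { intro x. apply NNPP. intro Hn.
   assert (Hlt : forall j, j <= m -> cnt j x < cnt (S j) x).
   { intros j Hj. pose proof (Hcm x j (S j) ltac:(lia) ltac:(lia)).
     destruct (Nat.eq_dec (cnt j x) (cnt (S j) x)); [|lia]. exfalso; apply Hn; eauto. }
   assert (Hge : forall j, j <= S m -> j + 1 <= cnt j x).
   { induction j; intro Hj; [apply Hpos; lia|]. pose proof (IHj ltac:(lia)).
     pose proof (Hlt j ltac:(lia)). lia. }
   pose proof (Hge (S m) (le_n _)). pose proof (proj2 (Hcnt x (S m) (le_n _))). lia. }
 pose (jx := fun x => epsilon inhN (fun j => j <= m /\ cnt j x = cnt (S j) x)).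
 assert (Hjx : forall x, jx x <= m /\ cnt (jx x) x = cnt (S (jx x)) x).
 { intro x. apply eps_spec. apply Hpig. }
 pose (chi := fun x => cnt (jx x) x - 1).
 pose (Rq := fun z w => forall A, Sj (jx z) z A <-> Sj (jx w) w A).
 assert (Hcross : forall x y j A, eps x y -> Sj j x A -> Sj (S j) y A).
 { intros x y j A Hxy [HU [z [Hz HA]]]. split; auto. exists z. split; auto.
   apply Hasym. apply (Hstep j z x y); auto. }
 assert (Hkey : forall x y, eps x y -> chi x = chi y -> Rq x y).
 { intros x y Hxy Hc A.
   destruct (Hjx x) as [Hjx1 Hjx2]. destruct (Hjx y) as [Hjy1 Hjy2].
   assert (Ec : cnt (jx x) x = cnt (jx y) y).
   { unfold chi in Hc. pose proof (Hpos x (jx x) ltac:(lia)).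
     pose proof (Hpos y (jx y) ltac:(lia)). lia. }
   destruct (Nat.le_gt_cases (jx x) (jx y)).
   - apply (lvl_half (fun j => Sj j x) (fun j => Sj j y) (jx x) (jx y)
       (cnt (jx x) x) (cnt (S (jx x)) x) (cnt (jx y) y) (cnt (S (jx y)) y));
     try apply Hcnt; auto; try lia.
     + intros j t; apply Hcross; auto.
     + intros j j' t; apply HSmono.
   - symmetry.
     apply (lvl_half (fun j => Sj j y) (fun j => Sj j x) (jx y) (jx x)
       (cnt (jx y) y) (cnt (S (jx y)) y) (cnt (jx x) x) (cnt (S (jx x)) x));
     try apply Hcnt; auto; try lia.
     + intros j t; apply Hcross; auto. apply Hsym; auto.
     + intros j j' t; apply HSmono. }
 assert (Hchain : forall l, chain_list eps l -> (forall z w, In z l -> In w l -> chi z = chi w) ->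
            forall z w, In z l -> In w l -> Rq z w).
 { intros l Hl. induction Hl as [|x|x y l Hxy Hl IH]; intros Hc z w Hz Hw.
   - destruct Hz.
   - destruct Hz as [<-|[]]; destruct Hw as [<-|[]]. intro; tauto.
   - assert (IH' : forall z w, In z (y :: l) -> In w (y :: l) -> Rq z w).
     { apply IH. intros; apply Hc; right; auto. }
     assert (Hy : forall z, In z (x :: y :: l) -> Rq z y).
     { intros z' [<-|Hz']. apply Hkey; auto. apply Hc; [left|right;left]; auto.
       apply IH'; auto. left; auto. }
     intro A. rewrite (Hy z Hz A), (Hy w Hw A). tauto. }
 destruct (Hcomp (a m) d0 (Ha m) Hd0) as [e4 [He4 H4]].
 destruct (Hcomp e4 (a m) He4 (Ha m)) as [e5 [He5 H5]].
 exists e5. split; auto. exists chi. split.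
 { intro x. unfold chi. pose proof (proj2 (Hcnt x (jx x) ltac:(pose proof (Hjx x); lia))).
   destruct (Hjx x). lia. }
 intros C [l [Hne [HC Hcl]]] Hmc x y Cx Cy.
 assert (HR : Rq x y).
 { apply (Hchain l Hcl); try apply HC; auto. intros z w Hz Hw. apply Hmc; apply HC; auto. }
 destruct (HS0 x) as [A [HA0 _]].
 assert (HAx : Sj (jx x) x A) by (apply (HSmono x 0); auto; lia).
 pose proof (proj1 (HR A) HAx) as HAy.
 destruct HAx as [HU [u [Hu HAu]]]. destruct HAy as [_ [u' [Hu' HAu']]].
 apply H5. exists u'. split.
 - apply H4. exists u. split.
   + apply (Hmono (jx x)); auto. apply Hjx.
   + apply Hmesh. exists A. auto.
 - apply Hasym. apply (Hmono (jx y)); auto. apply Hjx.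
Qed.

Lemma backward (X : Type) (E : entourage X -> Prop) (n : nat) :
  coarse_structure X E ->
  (forall eps, E eps ->
     exists delta, E delta /\
       exists chi : X -> nat, (forall x, chi x <= n) /\
         forall C : X -> Prop, is_chain eps C -> monochrome chi C ->
           forall x y, C x -> C y -> delta x y) -> asdim_le E n.
Proof.
 intros [Hrefl [Hsym [Hcomp Hsub]]] H. exists n; split; auto. intros eps Heps.
 destruct (Hcomp eps eps Heps Heps) as [e3 [He3 Hsub3]].
 destruct (H e3 He3) as [delta [Hdelta [chi [Hchi Hmc]]]].
 pose (R := fun u v => chi u = chi v /\ e3 u v).
 pose (comp := fun c z => clos_refl_trans X R c z).
 assert (Rsym : forall u v, clos_refl_trans X R u v -> clos_refl_trans X R v u).
 { intros u v Huv. induction Huv.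
   - apply rt_step. destruct H0. split; auto. apply Hsym; auto.
   - apply rt_refl.
   - eapply rt_trans; eauto. }
 assert (Hch : forall y z, clos_refl_trans_1n X R y z -> exists l, chain_list e3 (y :: l) /\
           In z (y :: l) /\ forall w, In w (y :: l) -> chi w = chi y).
 { intros y z Hyz. induction Hyz as [y|y w z Hyw Hwz IH].
   - exists []. split; [constructor|split; [left; auto|]]. intros w [<-|[]]; auto.
   - destruct IH as [l [Hl [Hz Hc]]]. exists (w :: l). split; [constructor; auto; apply Hyw|].
     split; [right; auto|]. intros w' [<-|Hw']; auto. rewrite (Hc w' Hw'). symmetry; apply Hyw. }
 exists (fun A => exists c, A = comp c). split; [|split].
 - intro x. exists (comp x). split; [eauto|]. apply rt_refl.
 - exists delta. split; auto. intros y z [A [[c ->] [Hy Hz]]].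
   assert (Hyz : clos_refl_trans X R y z) by (eapply rt_trans; [apply Rsym; exact Hy|exact Hz]).
   destruct (Hch y z (clos_rt_rt1n _ _ _ _ Hyz)) as [l [Hl [Hzl Hc]]].
   apply (Hmc (fun w => In w (y :: l))).
   + exists (y :: l). split; [congruence|split; [tauto|auto]].
   + intros u v Hu Hv. rewrite (Hc u Hu), (Hc v Hv). auto.
   + left; auto.
   + auto.
 - intro x.
   pose (pick := fun i => match excluded_middle_informative (exists y, eps x y /\ chi y = i) with
                 | left h => comp (proj1_sig (constructive_indefinite_description _ h))
                 | right _ => (fun _ : X => False) end).
   exists (map pick (seq 0 (S n))). split.
   { rewrite length_map, length_seq. auto. }
   intros A [c ->] [y [Hy HAy]]. unfold ball in Hy.
   replace (comp c) with (pick (chi y)).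
   { apply in_map. apply in_seq. pose proof (Hchi y). lia. }
   unfold pick. destruct (excluded_middle_informative _) as [h|h].
   + destruct (constructive_indefinite_description _ h) as [y' [Hy' Hc']]. simpl.
     assert (Hyy : clos_refl_trans X R y y').
     { apply rt_step. split; auto. apply Hsub3. exists x. split; auto. apply Hsym; auto. }
     apply functional_extensionality. intro z. apply propositional_extensionality.
     unfold comp. split; intro Hz.
     * eapply rt_trans; [exact HAy|]. eapply rt_trans; [exact Hyy|exact Hz].
     * eapply rt_trans; [apply Rsym; exact Hyy|]. eapply rt_trans; [apply Rsym; exact HAy|exact Hz].
   + exfalso. apply h. eauto.
Qed.

Theorem corollary2p4 (X : Type) (E : entourage X -> Prop) (n : nat) :
  coarse_structure X E ->
  (asdim_le E n <->
   forall eps, E eps ->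
     exists delta, E delta /\
       exists chi : X -> nat, (forall x, chi x <= n) /\
         forall C : X -> Prop, is_chain eps C -> monochrome chi C ->
           forall x y, C x -> C y -> delta x y).
Proof.
 intros Hc. split; [apply forward; auto|apply backward; auto].
Qed.
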